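(* Assume the multi-layer setting below with $\nabla f$ being $\hat L$-Lipschitz, and consider the multi-layer SAM flow at a point where not all $g_{k,l}$ vanish. Then for every layer $l\in[D]$, $$\frac{dQ_l}{dt}=4\rho u_D K_l\cdot\mathrm{Cov}_l\big(\|\mathcal G_{k,l}\|_F^2,\|g_{k,l}\|_F^2\big)+R_l,$$ where there is a constant $C$ depending only on $\Phi_1,\ldots,\Phi_D$, the $K_l$, $\hat L$, the Frobenius norms of all current cores and the norm of $\nabla f$ at the current point, such that $|R_l|\le C\rho^2$ for all $\rho\in(0,1]$.
   Context: Multi-layer setting: there are $D$ layers. Layer $l\in[D]$ has $K_l\ge2$ cores $\mathcal G_{1,l},\ldots,\mathcal G_{K_l,l}$ lying in finite-dimensional real tensor spaces (Frobenius inner product $\langle\cdot,\cdot\rangle_F$, norm $\|\cdot\|_F$), and a multilinear map $\Phi_l$ producing the layer tensor $\mathcal T_l=\Phi_l(\mathcal G_{1,l},\ldots,\mathcal G_{K_l,l})$. The loss is $F=f(\mathcal T_1,\ldots,\mathcal T_D)$ with $f$ continuously differentiable and its full gradient $\hat L$-Lipschitz: $\|\nabla f(\mathcal X)-\nabla f(\mathcal Y)\|\le \hat L\|\mathcal X-\mathcal Y\|$ where $\|\mathcal X\|^2=\sum_l\|\mathcal X_l\|_F^2$. Multi-layer SAM flow with radius $\rho>0$: $g_{k,l}=\nabla_{\mathcal G_{k,l}}F$ at the current cores, $u_D=(\sum_{l=1}^D\sum_{k=1}^{K_l}\|g_{k,l}\|_F^2)^{-1/2}$, $\tilde{\mathcal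 G}_{k,l}=\mathcal G_{k,l}+\rho u_D g_{k,l}$, $\tilde g_{k,l}=\nabla_{\mathcal G_{k,l}}F$ evaluated at all perturbed cores, and $\frac{d}{dt}\mathcal G_{k,l}=-\tilde g_{k,l}$. The layer-wise Norm Deviation is $Q_l:=\sum_{k=1}^{K_l}\big(\|\mathcal G_{k,l}\|_F^2-\frac1{K_l}\sum_{i=1}^{K_l}\|\mathcal G_{i,l}\|_F^2\big)^2$, and $\mathrm{Cov}_l(x_k,y_k):=\frac1{K_l}\sum_{k=1}^{K_l}(x_k-\bar x)(y_k-\bar y)$ with means over $k\in[K_l]$. *)

(* Defs.v *)
From HB Require Import structures.
From mathcomp Require Import all_boot all_order all_algebra.
From mathcomp Require Import all_classical all_reals all_analysis.
Import Order.TTheory GRing.Theory Num.Theory.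
Import numFieldNormedType.Exports.
Local Open Scope ring_scope.

(* Each core G_{k,l} lives in a finite-dimensional real
   tensor space, identified (by flattening) with R^(n l k) with the Euclidean
   = Frobenius inner product.  Layer tensors T_l live in R^(m l). *)

(* coordinates of the cores of layer l : pairs (k, i), k core index, i entry *)
Definition LCoord (D : nat) (K : 'I_D -> nat) (n : forall l, 'I_(K l) -> nat)
  (l : 'I_D) : Type := {k : 'I_(K l) & 'I_(n l k)}.
Arguments LCoord {D K} n l.
Definition Coord (D : nat) (K : 'I_D -> nat) (n : forall l, 'I_(K l) -> nat)
  : Type := {l : 'I_D & LCoord n l}.
Arguments Coord {D K} n.
Definition CIdx (D : nat) (K : 'I_D -> nat) : Type := {l : 'I_D & 'I_(K l)}.
Arguments CIdx {D} K.
Definition OCoord (D : nat) (m : 'I_D -> nat) : Type := {l : 'I_D & 'I_(m l)}.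
Arguments OCoord {D} m.

Definition coord (D : nat) (K : 'I_D -> nat) (n : forall l, 'I_(K l) -> nat)
  (l : 'I_D) (k : 'I_(K l)) (i : 'I_(n l k)) : Coord n :=
  existT _ l (existT _ k i).
Arguments coord {D K n l} k i.

Definition splice (R : Type) (D : nat) (K : 'I_D -> nat)
  (n : forall l, 'I_(K l) -> nat) (l : 'I_D)
  (z v : LCoord n l -> R) (k : 'I_(K l)) : LCoord n l -> R :=
  fun c => if tag c == k then v c else z c.
Arguments splice {R D K n l} z v k _.

Definition multilinear (R : realType) (D : nat) (K : 'I_D -> nat)
  (n : forall l, 'I_(K l) -> nat) (m : 'I_D -> nat) (l : 'I_D)
  (Phil : (LCoord n l -> R) -> 'I_(m l) -> R) : Prop :=
  forall (k : 'I_(K l)) (z v w : LCoord n l -> R) (a : R) (i : 'I_(m l)),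
    Phil (splice z (fun c => a * v c + w c) k) i
    = a * Phil (splice z v k) i + Phil (splice z w k) i.
Arguments multilinear {R D K n m l} Phil.

Definition layer (R : Type) (D : nat) (K : 'I_D -> nat)
  (n : forall l, 'I_(K l) -> nat) (theta : Coord n -> R) (l : 'I_D)
  : LCoord n l -> R := fun c => theta (existT _ l c).
Arguments layer {R D K n} theta l.

Definition layer_tensors (R : Type) (D : nat) (K : 'I_D -> nat)
  (n : forall l, 'I_(K l) -> nat) (m : 'I_D -> nat)
  (Phi : forall l, (LCoord n l -> R) -> 'I_(m l) -> R)
  (theta : Coord n -> R) : OCoord m -> R :=
  fun o => Phi (tag o) (layer theta (tag o)) (tagged o).
Arguments layer_tensors {R D K n m} Phi theta _.

Definition csum (R : realType) (D : nat) (K : 'I_D -> nat)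
  (n : forall l, 'I_(K l) -> nat) (x : Coord n -> R) : R :=
  \sum_(l < D) \sum_(k < K l) \sum_(i < n l k) x (coord k i).
Arguments csum {R D K n} x.
Definition osum (R : realType) (D : nat) (m : 'I_D -> nat)
  (x : OCoord m -> R) : R :=
  \sum_(l < D) \sum_(i < m l) x (existT _ l i).
Arguments osum {R D m} x.

Definition bumpc (R : realType) (X : eqType) (theta : X -> R) (x : X) (t : R)
  : X -> R := fun y => theta y + (if y == x then t else 0).
Arguments bumpc {R X} theta x t _.

Definition pderiv (R : realType) (X : eqType) (h : (X -> R) -> R)
  (theta : X -> R) (x : X) : R :=
  derive1 (fun t : R => h (bumpc theta x t)) 0.
Arguments pderiv {R X} h theta x.

Definition lossF (R : realType) (D : nat) (K : 'I_D -> nat)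
  (n : forall l, 'I_(K l) -> nat) (m : 'I_D -> nat)
  (Phi : forall l, (LCoord n l -> R) -> 'I_(m l) -> R)
  (f : (OCoord m -> R) -> R) (theta : Coord n -> R) : R :=
  f (layer_tensors Phi theta).
Arguments lossF {R D K n m} Phi f theta.

Definition gradF (R : realType) (D : nat) (K : 'I_D -> nat)
  (n : forall l, 'I_(K l) -> nat) (m : 'I_D -> nat)
  (Phi : forall l, (LCoord n l -> R) -> 'I_(m l) -> R)
  (f : (OCoord m -> R) -> R) (theta : Coord n -> R) : Coord n -> R :=
  pderiv (lossF Phi f) theta.
Arguments gradF {R D K n m} Phi f theta _.

Definition uD (R : realType) (D : nat) (K : 'I_D -> nat)
  (n : forall l, 'I_(K l) -> nat) (m : 'I_D -> nat)
  (Phi : forall l, (LCoord n l -> R) -> 'I_(m l) -> R)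
  (f : (OCoord m -> R) -> R) (theta : Coord n -> R) : R :=
  (Num.sqrt (csum (fun x => gradF Phi f theta x ^+ 2)))^-1.
Arguments uD {R D K n m} Phi f theta.

Definition samgrad (R : realType) (D : nat) (K : 'I_D -> nat)
  (n : forall l, 'I_(K l) -> nat) (m : 'I_D -> nat)
  (Phi : forall l, (LCoord n l -> R) -> 'I_(m l) -> R)
  (f : (OCoord m -> R) -> R) (rho : R) (theta : Coord n -> R) : Coord n -> R :=
  gradF Phi f (fun y => theta y + rho * uD Phi f theta * gradF Phi f theta y).
Arguments samgrad {R D K n m} Phi f rho theta _.

Definition coresq (R : realType) (D : nat) (K : 'I_D -> nat)
  (n : forall l, 'I_(K l) -> nat) (theta : Coord n -> R)
  (l : 'I_D) (k : 'I_(K l)) : R :=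
  \sum_(i < n l k) theta (coord k i) ^+ 2.
Arguments coresq {R D K n} theta l k.

Definition meanK (R : realType) (N : nat) (x : 'I_N -> R) : R :=
  N%:R^-1 * \sum_(i < N) x i.
Arguments meanK {R N} x.

Definition covK (R : realType) (N : nat) (x y : 'I_N -> R) : R :=
  N%:R^-1 * \sum_(k < N) (x k - meanK x) * (y k - meanK y).
Arguments covK {R N} x y.

Definition normdev (R : realType) (D : nat) (K : 'I_D -> nat)
  (n : forall l, 'I_(K l) -> nat) (theta : Coord n -> R) (l : 'I_D) : R :=
  \sum_(k < K l) (coresq theta l k - meanK (fun i => coresq theta l i)) ^+ 2.
Arguments normdev {R D K n} theta l.

HB.instance Definition _ (D : nat) (K : 'I_D -> nat)
  (n : forall l, 'I_(K l) -> nat) (l : 'I_D) :=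
  Equality.copy (LCoord n l) {k : 'I_(K l) & 'I_(n l k)}.
HB.instance Definition _ (D : nat) (K : 'I_D -> nat)
  (n : forall l, 'I_(K l) -> nat) :=
  Equality.copy (Coord n) {l : 'I_D & LCoord n l}.
HB.instance Definition _ (D : nat) (m : 'I_D -> nat) :=
  Equality.copy (OCoord m) {l : 'I_D & 'I_(m l)}.

(* Main.v *)
Require Import Defs.
From HB Require Import structures.
From mathcomp Require Import all_boot all_order all_algebra.
From mathcomp Require Import all_classical all_reals all_analysis.
From mathcomp Require Import ring lra.
Import Order.TTheory GRing.Theory Num.Theory.
Import numFieldNormedType.Exports.
Local Open Scope ring_scope.
Notation coord := Defs.coord (only parsing).

Section MVTsec.
Local Open Scope classical_set_scope.

Lemma mvt_bound (R : realType) (phi dphi : R -> R) (a B w : R) :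
  (forall t : R, is_derive t (1:R) phi (dphi t)) ->
  (forall c, `|c| <= `|w| -> `|dphi c - a| <= B) ->
  `|phi w - phi 0 - a * w| <= B * `|w|.
Proof.
move=> Hd Hb.
pose psi := fun t => phi t - a * t.
have Hpsi : forall t : R, is_derive t (1:R) psi (dphi t - a).
  move=> t; rewrite /psi.
  have H1 := is_deriveB (Hd t) (is_deriveZ a (is_derive_id t (1:R))).
  by move: H1; rewrite [_%:A]mulr1.
have Hc : forall u v : R, {within `[u, v], continuous psi}.
  move=> u v; apply: continuous_subspaceT => x.
  have := Hpsi x => -[dx _].
  by apply: differentiable_continuous; apply/derivable1_diffP.
have -> : phi w - phi 0 - a * w = psi w - psi 0 by rewrite /psi mulr0 subr0 addrAC.
case: (leP 0 w) => hw.
  have [c cin ->] := MVT_segment hw (fun x _ => Hpsi x) (Hc 0 w).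
  rewrite subr0 normrM ler_wpM2r //; apply: Hb.
  move: cin; rewrite in_itv /= => /andP[c0 cw].
  by rewrite !ger0_norm // (le_trans c0 cw).
have hw' : w <= 0 by apply: ltW.
have [c cin E] := MVT_segment hw' (fun x _ => Hpsi x) (Hc w 0).
rewrite -opprB E normrN normrM sub0r normrN ler_wpM2r //; apply: Hb.
move: cin; rewrite in_itv /= => /andP[wc c0].
by rewrite !ler0_norm // lerN2.
Qed.

End MVTsec.

Lemma shift_derive (R : realType) (phi : R -> R) (t : R) :
  derivable (fun s => phi (s + t)) 0 1 ->
  is_derive t (1:R) phi (derive1 (fun s => phi (s + t)) 0).
Proof.
have E : (fun h : R => h^-1 *: ((phi \o shift t) (h *: (1:R)) - phi t)) =
  (fun h => h^-1 *: (((fun s => phi (s + t)) \o shift 0) (h *: (1:R)) - phi (0 + t))).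
  by apply/funext => h /=; rewrite addr0 add0r.
move=> Hd; apply: DeriveDef.
  by rewrite /derivable E.
by rewrite derive1E /derive E.
Qed.

Lemma bumpc_bumpc (R : realType) (X : eqType) (Q : X -> R) x t s :
  bumpc (bumpc Q x t) x s = bumpc Q x (s + t).
Proof.
apply/funext => o; rewrite /bumpc; case: (o == x); last by rewrite !addr0.
by rewrite -addrA [t + s]addrC.
Qed.

Lemma taylor (R : realType) (X : finType) (f : (X -> R) -> R) (L : R) :
  0 <= L ->
  (forall P o, derivable (fun t : R => f (bumpc P o t)) 0 1) ->
  (forall P Q o, `|pderiv f P o - pderiv f Q o| <= L * \sum_o' `|P o' - Q o'|) ->
  forall P W, `|f (fun o => P o + W o) - f P - \sum_o pderiv f P o * W o|
     <= L * (\sum_o `|W o|) ^+ 2.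
Proof.
move=> L0 Hd HL P W.
suff : forall s : seq X, forall W, (forall o, o \notin s -> W o = 0) ->
  `|f (fun o => P o + W o) - f P - \sum_o pderiv f P o * W o|
     <= L * (\sum_o `|W o|) ^+ 2.
  by move=> /(_ (enum X) W); apply => o; rewrite mem_enum.
elim => [|x s IH] {}W HW.
  have W0 : forall o, W o = 0 by move=> o; apply: HW.
  have -> : (fun o => P o + W o) = P by apply/funext => o; rewrite W0 addr0.
  rewrite subrr sub0r normrN big1 ?normr0; first by apply: mulr_ge0 => //; apply: sqr_ge0.
  by move=> o _; rewrite W0 mulr0.
pose W' := fun o => if o == x then 0 else W o.
have HW' : forall o, o \notin s -> W' o = 0.
  move=> o os; rewrite /W'; case: eqP => // /eqP ox; apply: HW.
  by rewrite in_cons negb_or ox.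
have IH' := IH W' HW'.
pose Q := fun o => P o + W' o.
have EQ : (fun o => P o + W o) = bumpc Q x (W x).
  apply/funext => o; rewrite /bumpc /Q /W'; case: eqP => [->|_]; lra.
have EQ0 : Q = bumpc Q x 0.
  by apply/funext => o; rewrite /bumpc; case: (o == x); rewrite addr0.
have N1E : \sum_o `|W o| = `|W x| + \sum_o `|W' o|.
  rewrite (bigD1 x) //= [in RHS](bigD1 x) //=.
  congr (_ + _); rewrite /W' eqxx normr0 add0r.
  apply: eq_bigr => o /negPf ox; by rewrite ox.
have LE : \sum_o pderiv f P o * W o = pderiv f P x * W x + \sum_o pderiv f P o * W' o.
  rewrite (bigD1 x) //= [in RHS](bigD1 x) //=.
  congr (_ + _); rewrite /W' eqxx mulr0 add0r.
  apply: eq_bigr => o /negPf ox; by rewrite ox.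
have Hphi : forall t : R, is_derive t (1:R) (fun t => f (bumpc Q x t))
                             (pderiv f (bumpc Q x t) x).
  move=> t.
  have := @shift_derive R (fun t => f (bumpc Q x t)) t.
  have E2 : (fun s => f (bumpc Q x (s + t))) = (fun s => f (bumpc (bumpc Q x t) x s)).
    by apply/funext => s0; rewrite bumpc_bumpc.
  rewrite E2 => H; apply: H; exact: Hd.
have M := @mvt_bound R (fun t => f (bumpc Q x t)) (fun c => pderiv f (bumpc Q x c) x)
  (pderiv f P x) (L * \sum_o `|W o|) (W x) Hphi.
have := M _ => {M}.
move=> M.
have M' : `|f (bumpc Q x (W x)) - f (bumpc Q x 0) - pderiv f P x * W x|
           <= L * (\sum_o `|W o|) * `|W x|.
  apply: M => c hc; apply: le_trans (HL _ _ _) _; apply: ler_wpM2l => //.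
  rewrite N1E.
  apply: le_trans (_ : \sum_o (`|W' o| + `|if o == x then c else 0|) <= _).
    apply: ler_sum => o _; rewrite /bumpc /Q.
    have -> : P o + W' o + (if o == x then c else 0) - P o
              = W' o + (if o == x then c else 0) by lra.
    exact: ler_normD.
  rewrite big_split /= addrC lerD2r (bigD1 x) //= eqxx big1 ?addr0 //.
  by move=> o /negPf ->; rewrite normr0.
rewrite EQ LE -EQ0 in M' *.
have -> : f (bumpc Q x (W x)) - f P - (pderiv f P x * W x + \sum_o pderiv f P o * W' o)
   = (f (bumpc Q x (W x)) - f Q - pderiv f P x * W x)
     + (f Q - f P - \sum_o pderiv f P o * W' o).
  by rewrite /Q; lra.
apply: le_trans (ler_normD _ _) _.
apply: le_trans (lerD M' IH') _.
rewrite N1E.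
have a0 : 0 <= `|W x| by [].
have b0 : 0 <= \sum_o `|W' o| by apply: sumr_ge0.
move: a0 b0; set a := `|W x|; set b := \sum_o _ => a0 b0.
have : 0 <= L * (a * b) by apply: mulr_ge0 => //; apply: mulr_ge0.
nra.
Qed.

Lemma deriv_from_bound (R : realType) (h : R -> R) (d c : R) :
  (forall k, `|h k - h 0 - k * d| <= c * k ^+ 2) ->
  derive1 h 0 = d.
Proof.
move=> Hb; rewrite /derive1; apply: cvg_lim => //.
apply/cvgrPdist_le => e e0; near=> k.
have k0 : k != 0 by near: k; exact: nbhs_dnbhs_neq.
have c1 : 0 < `|c| + 1 by apply: ltr_pwDr.
have kl : `|k| <= e / (`|c| + 1).
  near: k; apply: dnbhs0_le; exact: divr_gt0.
have -> : d - k^-1 *: (h (k + 0) - h 0) = - (k^-1 * (h k - h 0 - k * d)).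
  rewrite addr0 /GRing.scale /= mulrBr mulrBr mulrA mulVf // mul1r; lra.
rewrite normrN normrM normrV ?unitfE //.
have kp : 0 < `|k| by rewrite normr_gt0.
rewrite ler_pdivrMl //.
apply: le_trans (Hb k) _.
apply: le_trans (_ : `|c| * `|k| ^+ 2 <= _).
  by rewrite real_normK ?num_real // ler_wpM2r ?sqr_ge0 // ler_norm.
have : `|c| * `|k| <= e.
  move: kl; rewrite ler_pdivlMr // => kl; apply: le_trans kl.
  by rewrite mulrC ler_wpM2l // lerDl.
move=> H; rewrite expr2 mulrA [`|k| * e]mulrC ler_wpM2r //.
Unshelve. all: by end_near.
Qed.

Lemma term_le_sum (R : realDomainType) (I : finType) (F : I -> R) (j : I) :
  (forall i, 0 <= F i) -> F j <= \sum_i F i.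
Proof.
move=> H; rewrite (bigD1 j) //= lerDl; apply: sumr_ge0 => i _; exact: H.
Qed.

Section PhiSec.
Variables (R : realType) (D : nat) (K : 'I_D -> nat)
  (n : forall l, 'I_(K l) -> nat) (m : 'I_D -> nat) (l : 'I_D).
Variable Phi : (LCoord n l -> R) -> 'I_(m l) -> R.
Hypothesis HPhi : multilinear Phi.

Definition LF : finType := {k : 'I_(K l) & 'I_(n l k)}.

Lemma sumLF (F : LCoord n l -> R) :
  \sum_(c : LF) F c = \sum_(k < K l) \sum_(i < n l k) F (existT _ k i).
Proof.
rewrite (@sig_big_dep _ _ _ 'I_(K l) (fun k => 'I_(n l k)) xpredT (fun _ => xpredT)
  (fun k i => F (existT _ k i))).
by apply: eq_bigr => -[k i].
Qed.

Definition ebas (k : 'I_(K l)) (i : 'I_(n l k)) : LCoord n l -> R :=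
  fun c => if c == existT _ k i then 1 else 0.

Lemma splice_id (z : LCoord n l -> R) k : splice z z k = z.
Proof. by apply/funext => c; rewrite /splice /=; case: ifP. Qed.

Lemma splice_splice (z v w : LCoord n l -> R) k :
  splice (splice z v k) w k = splice z w k.
Proof. by apply/funext => c; rewrite /splice /=; case: (tag c == k). Qed.

Lemma splice_comm (z v w : LCoord n l -> R) k k' : k != k' ->
  splice (splice z v k) w k' = splice (splice z w k') v k.
Proof.
move=> kk; apply/funext => c; rewrite /splice /=.
case: ifP => /eqP h1; case: ifP => /eqP h2 //.
by move: kk; rewrite -h1 -h2 eqxx.
Qed.

Lemma Phi_splice0 (z : LCoord n l -> R) k i : Phi (splice z (fun _ => 0) k) i = 0.
Proof.
have := HPhi k z (fun _ => 0) (fun _ => 0) 1 i.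
have -> : (fun _ : LCoord n l => 1 * 0 + 0) = (fun _ => 0 : R).
  by apply/funext => c; rewrite mulr0 addr0.
lra.
Qed.

Lemma Phi_sum (J : Type) (s : seq J) (a : J -> R) (v : J -> LCoord n l -> R) z k i :
  Phi (splice z (fun c => \sum_(j <- s) a j * v j c) k) i
  = \sum_(j <- s) a j * Phi (splice z (v j) k) i.
Proof.
elim: s => [|x s IH].
  have -> : (fun c => \sum_(j <- [::]) a j * v j c) = (fun _ => 0 : R).
    by apply/funext => c; rewrite big_nil.
  by rewrite Phi_splice0 big_nil.
have -> : (fun c => \sum_(j <- x :: s) a j * v j c)
   = (fun c => a x * v x c + \sum_(j <- s) a j * v j c).
  by apply/funext => c; rewrite big_cons.
by rewrite HPhi IH big_cons.
Qed.

Lemma Phi_expand (z v : LCoord n l -> R) k i :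
  Phi (splice z v k) i
  = \sum_(j < n l k) v (existT _ k j) * Phi (splice z (ebas k j) k) i.
Proof.
have -> : splice z v k
  = splice z (fun c => \sum_(j < n l k) v (existT _ k j) * ebas k j c) k.
  apply/funext => -[k' j']; rewrite /splice /=.
  case: eqP => // E; subst k'.
  rewrite (bigD1 j') //= /ebas eqxx mulr1 big1 ?addr0 //.
  move=> j /negPf jj; rewrite eq_Tagged /=.
  by rewrite eq_sym jj mulr0.
exact: Phi_sum.
Qed.


Definition zsig (sg : {dffun forall k : 'I_(K l), 'I_(n l k)}) : LCoord n l -> R :=
  fun c => if tagged c == sg (tag c) then 1 else 0.

Lemma Phi_bounded : exists M : R -> R, (forall r, 0 <= M r) /\
  forall (r : R) (z : LCoord n l -> R) i, 0 <= r -> (forall c, `|z c| <= r) -> `|Phi z i| <= M r.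
Proof.
suff P : forall j, (j <= K l)%N -> exists M : R -> R, (forall r, 0 <= M r) /\
  forall (r : R) (z : LCoord n l -> R) i, 0 <= r -> (forall c, `|z c| <= r) ->
   (forall k : 'I_(K l), (j <= k)%N -> exists i0, splice z (ebas k i0) k = z) ->
   `|Phi z i| <= M r.
  have [M [M0 HM]] := P (K l) (leqnn _); exists M; split => // r z i r0 zr.
  by apply: HM => // k; rewrite leqNgt ltn_ord.
elim => [_|j IH hj].
  exists (fun _ => \sum_(sg : {dffun forall k : 'I_(K l), 'I_(n l k)})
                   \sum_(i' < m l) `|Phi (zsig sg) i'|).
  split; first by move=> r; apply: sumr_ge0 => ? _; apply: sumr_ge0.
  move=> r z i r0 zr H.
  have sf : forall k : 'I_(K l), {i0 | splice z (ebas k i0) k = z}.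
    by move=> k; apply: cid; apply: H.
  pose sg : {dffun forall k : 'I_(K l), 'I_(n l k)} := finfun (fun k => sval (sf k)).
  have -> : z = zsig sg.
    apply/funext => -[k j0]; rewrite /zsig /= /sg ffunE.
    have E := svalP (sf k).
    have := congr1 (fun h => h (existT _ k j0)) E.
    by rewrite /splice /= eqxx /ebas eq_Tagged /= => <-.
  apply: le_trans (_ : \sum_(i' < m l) `|Phi (zsig sg) i'| <= _).
    by apply: (@term_le_sum R _ (fun i' => `|Phi (zsig sg) i'|)).
  apply: (@term_le_sum R _ (fun sg => \sum_(i' < m l) `|Phi (zsig sg) i'|)).
  by move=> ?; apply: sumr_ge0.
have hj' : (j < K l)%N by [].
have [M [M0 HM]] := IH (ltnW hj).
pose kj : 'I_(K l) := Ordinal hj'.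
exists (fun r => (n l kj)%:R * (`|r| * M (`|r| + 1))).
split; first by move=> r; apply: mulr_ge0 => //; apply: mulr_ge0.
move=> r z i r0 zr H.
rewrite -[z in Phi z](splice_id z kj) Phi_expand.
apply: le_trans (ler_norm_sum _ _ _) _.
apply: le_trans (_ : \sum_(j0 < n l kj) (`|r| * M (`|r| + 1)) <= _).
  apply: ler_sum => j0 _; rewrite normrM; apply: ler_pM => //.
    by rewrite (ger0_norm r0); apply: zr.
  apply: HM; first by apply: addr_ge0.
    move=> c; rewrite /splice /=; case: ifP => _.
      rewrite /ebas; case: ifP => _; rewrite ?normr1 ?normr0; have := normr_ge0 r; lra.
    by apply: le_trans (zr c) _; rewrite ger0_norm //; lra.
  move=> k jk; case: (eqVneq k kj) => [->|kk].
    by exists j0; rewrite splice_splice.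
  have jk' : (j.+1 <= k)%N.
    rewrite ltn_neqAle jk andbT; apply: contra kk => /eqP E.
    by apply/eqP; apply: val_inj; rewrite /= E.
  have [i1 E1] := H k jk'; exists i1.
  by rewrite splice_comm ?E1 // eq_sym.
by rewrite sumr_const card_ord mulr_natl.
Qed.

Lemma Phi_lip : exists L : R -> R, (forall r, 0 <= L r) /\
  forall (r : R) (z w : LCoord n l -> R) i, 0 <= r -> (forall c, `|z c| <= r) -> (forall c, `|w c| <= r) ->
  `|Phi z i - Phi w i| <= L r * \sum_(c : LF) `|z c - w c|.
Proof.
have [Mb [Mb0 HMb]] := Phi_bounded.
suff P : forall j, (j <= K l)%N -> exists L : R -> R, (forall r, 0 <= L r) /\
  forall (r : R) (z w : LCoord n l -> R) i, 0 <= r -> (forall c, `|z c| <= r) -> (forall c, `|w c| <= r) ->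
  (forall c : LCoord n l, (j <= tag c)%N -> z c = w c) ->
  `|Phi z i - Phi w i| <= L r * \sum_(c : LF) `|z c - w c|.
  have [L [L0 HL]] := P (K l) (leqnn _); exists L; split => // r z w i r0 zr wr.
  by apply: HL => // c; rewrite leqNgt ltn_ord.
elim => [_|j IH hj].
  exists (fun _ => 0); split => // r z w i r0 zr wr H.
  have -> : z = w by apply/funext => c; apply: H.
  by rewrite subrr normr0 mul0r.
have hj' : (j < K l)%N by [].
have [L [L0 HL]] := IH (ltnW hj).
pose kj : 'I_(K l) := Ordinal hj'.
exists (fun r => Mb (`|r| + 1) + L r).
split; first by move=> r; apply: addr_ge0.
move=> r z w i r0 zr wr H.
pose y := splice z w kj.
have yr : forall c, `|y c| <= r by move=> c; rewrite /y /splice /=; case: ifP.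
have yw : forall c : LCoord n l, (j <= tag c)%N -> y c = w c.
  move=> c jc; rewrite /y /splice /=; case: ifP => // /negP kc; apply: H.
  rewrite ltn_neqAle jc andbT; apply/negP => /eqP E; apply: kc.
  by apply/eqP; apply: val_inj; rewrite /= E.
have Ez : Phi z i - Phi y i = Phi (splice z (fun c => z c - w c) kj) i.
  have := HPhi kj z (fun c => z c - w c) w 1 i.
  have -> : (fun c => 1 * (z c - w c) + w c) = z.
    by apply/funext => c; rewrite mul1r subrK.
  by rewrite splice_id mul1r /y => ->; rewrite addrK.
have -> : Phi z i - Phi w i = (Phi z i - Phi y i) + (Phi y i - Phi w i) by lra.
apply: le_trans (ler_normD _ _) _; rewrite mulrDl; apply: lerD.
  rewrite Ez Phi_expand.
  apply: le_trans (ler_norm_sum _ _ _) _.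
  apply: le_trans (_ : \sum_(j0 < n l kj) (`|z (existT _ kj j0) - w (existT _ kj j0)|
                         * Mb (`|r| + 1)) <= _).
    apply: ler_sum => j0 _; rewrite normrM; apply: ler_wpM2l => //.
    apply: HMb; first by apply: addr_ge0.
    move=> c; rewrite /splice /=; case: ifP => _.
      rewrite /ebas; case: ifP => _; rewrite ?normr1 ?normr0; have := normr_ge0 r; lra.
    by apply: le_trans (zr c) _; rewrite ger0_norm //; lra.
  rewrite -mulr_suml mulrC ler_wpM2l // sumLF.
  apply: le_trans (_ : \sum_(j0 < n l kj) `|z (existT _ kj j0) - w (existT _ kj j0)|
     <= \sum_(k < K l) \sum_(i0 < n l k) `|z (existT _ k i0) - w (existT _ k i0)|) _ => //.
  by apply: (@term_le_sum R _ (fun k => \sum_(i0 < n l k) `|z (existT _ k i0) - w (existT _ k i0)|))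
   => k; apply: sumr_ge0.
apply: le_trans (HL r y w i r0 yr wr yw) _.
apply: ler_wpM2l => //; apply: ler_sum => c _.
rewrite /y /splice /=; case: ifP => _ //; rewrite subrr normr0 //.
Qed.

End PhiSec.
Arguments LF {D K} n l.
Arguments ebas {R D K n l} k i _.
Arguments sumLF {R D K n l} F.
Arguments Phi_expand {R D K n m l Phi} HPhi z v k i.
Arguments Phi_sum {R D K n m l Phi} HPhi {J} s a v z k i.
Arguments splice_id {R D K n l} z k.
Arguments splice_splice {R D K n l} z v w k.
Arguments splice_comm {R D K n l} z v w k k'.
Arguments Phi_bounded {R D K n m l Phi} HPhi.
Arguments Phi_lip {R D K n m l Phi} HPhi.

Lemma abs_le_sqrt (R : realType) (I : finType) (F : I -> R) (j : I) :
  `|F j| <= Num.sqrt (\sum_i F i ^+ 2).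
Proof.
rewrite -sqrtr_sqr; apply: ler_wsqrtr.
by apply: (@term_le_sum R _ (fun i => F i ^+ 2)) => i; apply: sqr_ge0.
Qed.

Lemma sqrt_le_l1 (R : realType) (I : finType) (F : I -> R) :
  Num.sqrt (\sum_i F i ^+ 2) <= \sum_i `|F i|.
Proof.
have S0 : 0 <= \sum_i `|F i| by apply: sumr_ge0.
rewrite -[X in _ <= X]ger0_norm // -sqrtr_sqr; apply: ler_wsqrtr.
rewrite expr2 mulr_suml; apply: ler_sum => i _.
rewrite -[F i ^+ 2]real_normK ?num_real // expr2 ler_wpM2l //.
exact: (@term_le_sum R _ (fun i => `|F i|)).
Qed.

Lemma dir_deriv (R : realType) (X : finType) (f : (X -> R) -> R) (L : R) :
  0 <= L ->
  (forall P o, derivable (fun t : R => f (bumpc P o t)) 0 1) ->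
  (forall P Q o, `|pderiv f P o - pderiv f Q o| <= L * \sum_o' `|P o' - Q o'|) ->
  forall P V : X -> R,
  derive1 (fun t => f (fun o => P o + t * V o)) 0 = \sum_o pderiv f P o * V o.
Proof.
move=> L0 Hd HL P V.
apply: (@deriv_from_bound R _ _ (L * (\sum_o `|V o|) ^+ 2)) => k.
have T := @taylor R X f L L0 Hd HL P (fun o => k * V o).
have -> : (fun o => P o + 0 * V o) = P by apply/funext => o; rewrite mul0r addr0.
have -> : k * \sum_o pderiv f P o * V o = \sum_o pderiv f P o * (k * V o).
  by rewrite mulr_sumr; apply: eq_bigr => o _; rewrite mulrCA.
apply: le_trans T _.
have -> : \sum_o `|k * V o| = `|k| * \sum_o `|V o|.
  by rewrite mulr_sumr; apply: eq_bigr => o _; rewrite normrM.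
by rewrite exprMn real_normK ?num_real // [k ^+ 2 * _]mulrC mulrA.
Qed.

Section Glob.
Variables (R : realType) (D : nat) (K : 'I_D -> nat)
  (n : forall l, 'I_(K l) -> nat) (m : 'I_D -> nat).
Variable Phi : forall l, (LCoord n l -> R) -> 'I_(m l) -> R.
Hypothesis HPhi : forall l, multilinear (Phi l).

Definition CF : finType := {l : 'I_D & {k : 'I_(K l) & 'I_(n l k)}}.
Definition OF : finType := {l : 'I_D & 'I_(m l)}.

Lemma csumE (F : Coord n -> R) : csum F = \sum_(c : CF) F c.
Proof.
rewrite /csum.
have -> : \sum_(l < D) \sum_(k < K l) \sum_(i < n l k) F (coord k i)
   = \sum_(l < D) \sum_(c : LF n l) F (existT _ l c).
  by apply: eq_bigr => l _; rewrite (sumLF (fun c => F (existT _ l c))).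
rewrite (@sig_big_dep _ _ _ 'I_D (fun l => LF n l) xpredT (fun _ => xpredT)
  (fun l c => F (existT _ l c))).
by apply: eq_bigr => -[l c].
Qed.

Lemma osumE (F : OCoord m -> R) : osum F = \sum_(o : OF) F o.
Proof.
rewrite /osum (@sig_big_dep _ _ _ 'I_D (fun l => 'I_(m l)) xpredT (fun _ => xpredT)
  (fun l c => F (existT _ l c))).
by apply: eq_bigr => -[l c].
Qed.

Lemma layer_bump (th : Coord n -> R) l (k : 'I_(K l)) (i : 'I_(n l k)) t j :
  Phi l (layer (bumpc th (coord k i) t) l) j
  = Phi l (layer th l) j + t * Phi l (splice (layer th l) (ebas k i) k) j.
Proof.
have -> : layer (bumpc th (coord k i) t) l
   = splice (layer th l) (fun c => t * ebas k i c + layer th l c) k.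
  apply/funext => -[k' j']; rewrite /layer /bumpc /splice /coord /= eq_Tagged /=.
  case: (eqVneq k' k) => [E|ne].
    by subst k'; rewrite /ebas; case: (_ == _); lra.
  have -> : (existT (fun k0 => 'I_(n l k0)) k' j' == existT _ k i) = false.
    by apply/negP => /eq_tag /= E; move: ne; rewrite E eqxx.
  by rewrite addr0.
by rewrite HPhi splice_id addrC.
Qed.

Lemma layer_bump_other (th : Coord n -> R) l l' (k : 'I_(K l)) (i : 'I_(n l k)) t :
  l' != l -> layer (bumpc th (coord k i) t) l' = layer th l'.
Proof.
move=> ne; apply/funext => c; rewrite /layer /bumpc /coord.
have -> : (existT (fun l0 => LCoord n l0) l' c == existT _ l (existT _ k i)) = false.
  by apply/negP => /eq_tag /= E; move: ne; rewrite E eqxx.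
by rewrite addr0.
Qed.

Variables (f : (OCoord m -> R) -> R) (L : R).
Hypothesis L0 : 0 <= L.
Hypothesis Hd : forall (P : OF -> R) o, derivable (fun t : R => f (bumpc P o t)) 0 1.
Hypothesis HL : forall (P Q : OF -> R) o,
  `|pderiv f P o - pderiv f Q o| <= L * \sum_o' `|P o' - Q o'|.

Lemma gradF_formula (th : Coord n -> R) l (k : 'I_(K l)) (i : 'I_(n l k)) :
  gradF Phi f th (coord k i)
  = \sum_(j < m l) pderiv f (layer_tensors Phi th) (existT _ l j)
                   * Phi l (splice (layer th l) (ebas k i) k) j.
Proof.
rewrite /gradF /pderiv /lossF.
pose T := layer_tensors Phi th.
pose V := fun o : OF => Phi (tag o) (layer (bumpc th (coord k i) 1) (tag o)) (tagged o) - T o.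
have E : (fun t => f (layer_tensors Phi (bumpc th (coord k i) t)))
       = (fun t => f (fun o => T o + t * V o)).
  apply/funext => t; congr f; apply/funext => -[l' j].
  rewrite /layer_tensors /V /T /layer_tensors /=.
  case: (eqVneq l' l) => [E|ne].
    subst l'; rewrite !layer_bump; lra.
  rewrite !layer_bump_other //; lra.
rewrite E (@dir_deriv R OF f L L0 Hd HL T V).
rewrite -(osumE (fun o => pderiv f T o * V o)) /osum (bigD1 l) //=.
rewrite [X in _ + X]big1 ?addr0; last first.
  move=> l' ne; apply: big1 => j _.
  by rewrite /V /T /layer_tensors /= layer_bump_other // subrr mulr0.
apply: eq_bigr => j _; congr (_ * _).
rewrite /V /T /layer_tensors /= layer_bump; lra.
Qed.

Lemma euler (th : Coord n -> R) l (k : 'I_(K l)) :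
  \sum_(i < n l k) th (coord k i) * gradF Phi f th (coord k i)
  = \sum_(j < m l) pderiv f (layer_tensors Phi th) (existT _ l j) * Phi l (layer th l) j.
Proof.
under eq_bigr do rewrite gradF_formula mulr_sumr.
rewrite exchange_big /=; apply: eq_bigr => j _.
rewrite -[in RHS](splice_id (layer th l) k) (Phi_expand (HPhi l)) mulr_sumr.
by apply: eq_bigr => i _; rewrite /layer /coord; lra.
Qed.

End Glob.
Arguments CF {D K} n.
Arguments OF {D} m.
Arguments csumE {R D K n} F.
Arguments osumE {R D m} F.
Arguments layer_bump {R D K n m Phi} HPhi th l k i t j.
Arguments layer_bump_other {R D K n} th l l' k i t _.
Arguments gradF_formula {R D K n m Phi} HPhi {f L} L0 Hd HL th l k i.
Arguments euler {R D K n m Phi} HPhi {f L} L0 Hd HL th l k.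

Section Lip.
Variables (R : realType) (D : nat) (K : 'I_D -> nat)
  (n : forall l, 'I_(K l) -> nat) (m : 'I_D -> nat).
Variable Phi : forall l, (LCoord n l -> R) -> 'I_(m l) -> R.
Hypothesis HPhi : forall l, multilinear (Phi l).
Variables (f : (OCoord m -> R) -> R) (L : R).
Hypothesis L0 : 0 <= L.
Hypothesis Hd : forall (P : OF m -> R) o, derivable (fun t : R => f (bumpc P o t)) 0 1.
Hypothesis HL : forall (P Q : OF m -> R) o,
  `|pderiv f P o - pderiv f Q o| <= L * \sum_o' `|P o' - Q o'|.

Lemma sumCF (F : Coord n -> R) :
  \sum_(c : CF n) F c = \sum_(l < D) \sum_(c : LF n l) F (existT _ l c).
Proof.
rewrite (@sig_big_dep _ _ _ 'I_D (fun l => LF n l) xpredT (fun _ => xpredT)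
  (fun l c => F (existT _ l c))).
by apply: eq_bigr => -[l c].
Qed.

Lemma layer_sum_le (F : Coord n -> R) l : (forall c, 0 <= F c) ->
  \sum_(c : LF n l) F (existT _ l c) <= \sum_(c : CF n) F c.
Proof.
move=> H; rewrite sumCF.
apply: (@term_le_sum R _ (fun l => \sum_(c : LF n l) F (existT _ l c))).
by move=> l'; apply: sumr_ge0.
Qed.

Definition NO : R := \sum_(l < D) (m l)%:R.

Variables (r M : R).
Hypothesis r1 : 1 <= r.
Hypothesis HM : forall l (z w : LCoord n l -> R) j,
  (forall c, `|z c| <= r) -> (forall c, `|w c| <= r) ->
  `|Phi l z j| <= M /\ `|Phi l z j - Phi l w j| <= M * \sum_(c : LF n l) `|z c - w c|.

Hypothesis M0 : 0 <= M.

Lemma T_lip (th th' : Coord n -> R) :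
  (forall c, `|th c| <= r) -> (forall c, `|th' c| <= r) ->
  forall o : OF m, `|layer_tensors Phi th' o - layer_tensors Phi th o|
     <= M * \sum_(c : CF n) `|th' c - th c|.
Proof.
move=> hr hr' [l j]; rewrite /layer_tensors /=.
have [_ H] := HM l _ _ j (fun c => hr' (existT _ l c)) (fun c => hr (existT _ l c)).
apply: le_trans H _.
apply: ler_wpM2l => //.
exact: (layer_sum_le (fun c => `|th' c - th c|)).
Qed.

Lemma splice_bound l (z : LCoord n l -> R) k i :
  (forall c, `|z c| <= r) -> forall c, `|splice z (ebas k i) k c| <= r.
Proof.
move=> H c; rewrite /splice /=; case: ifP => _; last exact: H.
rewrite /ebas; case: ifP => _; first by rewrite normr1.
by rewrite normr0; apply: le_trans r1.
Qed.

Lemma sumOF_const (c : R) : \sum_(o : OF m) c = NO * c.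
Proof.
rewrite -(osumE (fun _ => c)) /osum /NO mulr_suml; apply: eq_bigr => l _.
by rewrite sumr_const card_ord mulr_natl.
Qed.

Lemma NO_ge (l : 'I_D) : (m l)%:R <= NO.
Proof. by apply: (@term_le_sum R _ (fun l => (m l)%:R)) => l'. Qed.

Lemma NO_ge0 : 0 <= NO.
Proof. by apply: sumr_ge0. Qed.

Variables (G : R).
Hypothesis G0 : 0 <= G.
Lemma g_lip (th th' : Coord n -> R) l (k : 'I_(K l)) (i : 'I_(n l k)) :
  (forall c, `|th c| <= r) -> (forall c, `|th' c| <= r) ->
  (forall o : OF m, `|pderiv f (layer_tensors Phi th) o| <= G) ->
  `|gradF Phi f th' (coord k i) - gradF Phi f th (coord k i)|
   <= NO * ((L * NO * M * M + G * M) * \sum_(c : CF n) `|th' c - th c|).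
Proof.
move=> hr hr' hG.
set N1 := \sum_(c : CF n) `|th' c - th c|.
have N10 : 0 <= N1 by apply: sumr_ge0.
rewrite (gradF_formula HPhi L0 Hd HL th') (gradF_formula HPhi L0 Hd HL th) -sumrB.
apply: le_trans (ler_norm_sum _ _ _) _.
set X := (L * NO * M * M + G * M) * N1.
have X0 : 0 <= X.
  apply: mulr_ge0 => //; apply: addr_ge0; apply: mulr_ge0 => //.
  by apply: mulr_ge0 => //; apply: mulr_ge0 => //; apply: NO_ge0.
apply: le_trans (_ : \sum_(j < m l) X <= _).
  apply: ler_sum => j _.
  set T' := layer_tensors Phi th'; set T := layer_tensors Phi th.
  set P' := Phi l (splice (layer th' l) (ebas k i) k) j.
  set P := Phi l (splice (layer th l) (ebas k i) k) j.
  set d' := pderiv f T' (existT _ l j); set d := pderiv f T (existT _ l j).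
  have HP : `|P'| <= M /\ `|P' - P| <= M * \sum_(c : LF n l)
       `|splice (layer th' l) (ebas k i) k c - splice (layer th l) (ebas k i) k c|.
    by apply: HM; apply: splice_bound => c; [apply: hr'|apply: hr].
  case: HP => HP1 HP2.
  have HP3 : `|P' - P| <= M * N1.
    apply: le_trans HP2 _; apply: ler_wpM2l => //.
    apply: le_trans (_ : \sum_(c : LF n l) `|th' (existT _ l c) - th (existT _ l c)| <= _).
      apply: ler_sum => c _; rewrite /splice /=; case: ifP => _ //.
      by rewrite subrr normr0.
    exact: (layer_sum_le (fun c => `|th' c - th c|)).
  have Hd1 : `|d' - d| <= L * (NO * (M * N1)).
    apply: le_trans (HL T' T (existT _ l j)) _; apply: ler_wpM2l => //.
    rewrite -sumOF_const; apply: ler_sum => o _.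
    exact: T_lip.
  have Hd2 : `|d| <= G by apply: hG.
  have -> : d' * P' - d * P = (d' - d) * P' + d * (P' - P) by ring.
  apply: le_trans (ler_normD _ _) _; rewrite !normrM.
  have -> : X = L * (NO * (M * N1)) * M + G * (M * N1) by rewrite /X; ring.
  apply: lerD; apply: ler_pM => //.
rewrite sumr_const card_ord -mulr_natl ler_wpM2r //; exact: NO_ge.
Qed.

End Lip.

Section Der.
Variable R : realType.

Lemma is_derive_sumf (N : nat) (h : 'I_N -> R -> R) (dh : 'I_N -> R) (t0 : R) :
  (forall i, is_derive t0 (1:R) (h i) (dh i)) ->
  is_derive t0 (1:R) (fun t => \sum_(i < N) h i t) (\sum_(i < N) dh i).
Proof.
move=> H; have := is_derive_sum H.
by have -> : (fun t => \sum_(i < N) h i t) = \sum_(i < N) h i by rewrite fct_sumE.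
Qed.

Lemma is_derive_cmul (h : R -> R) (dh c t0 : R) :
  is_derive t0 (1:R) h dh -> is_derive t0 (1:R) (fun t => c * h t) (c * dh).
Proof. by move=> H; have := is_deriveZ c H. Qed.

Lemma is_derive_subf (h1 h2 : R -> R) (d1 d2 t0 : R) :
  is_derive t0 (1:R) h1 d1 -> is_derive t0 (1:R) h2 d2 ->
  is_derive t0 (1:R) (fun t => h1 t - h2 t) (d1 - d2).
Proof. by move=> H1 H2; have := is_deriveB H1 H2. Qed.

Lemma is_derive_sqf (h : R -> R) (dh t0 : R) :
  is_derive t0 (1:R) h dh -> is_derive t0 (1:R) (fun t => h t ^+ 2) (2 * h t0 * dh).
Proof.
move=> H; have := is_deriveX 2 H.
have -> : (h ^+ 2) = (fun t => h t ^+ 2) by apply/funext => t; rewrite /= expr2.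
by rewrite expr1 /GRing.scale /=.
Qed.

End Der.

Theorem theorem5 (R : realType) (D : nat) (K : 'I_D -> nat)
  (n : forall l, 'I_(K l) -> nat) (m : 'I_D -> nat)
  (Phi : forall l, (LCoord n l -> R) -> 'I_(m l) -> R) :
  (forall l, (2 <= K l)%N) ->
  (forall l, multilinear (Phi l)) ->
  exists C : R -> (CIdx K -> R) -> R -> R,
  forall (Lhat : R) (f : (OCoord m -> R) -> R),
    (* f has all partial derivatives ... *)
    (forall (X : OCoord m -> R) (o : OCoord m),
        derivable (fun t : R => f (bumpc X o t)) 0 1) ->
    (* ... and its gradient (vector of partials) is Lhat-Lipschitz *)
    (forall X Y : OCoord m -> R,
        Num.sqrt (osum (fun o => (pderiv f X o - pderiv f Y o) ^+ 2))
        <= Lhat * Num.sqrt (osum (fun o => (X o - Y o) ^+ 2))) ->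
  forall (rho : R), 0 < rho -> rho <= 1 ->
  forall (Theta : R -> Coord n -> R) (t0 : R),
    (* SAM flow at time t0:  d/dt G_{k,l} = - tilde g_{k,l} *)
    (forall x : Coord n,
        is_derive t0 1 (fun t => Theta t x) (- samgrad Phi f rho (Theta t0) x)) ->
    (* not all g_{k,l} vanish *)
    (exists x : Coord n, gradF Phi f (Theta t0) x != 0) ->
  forall l : 'I_D,
    derivable (fun t => normdev (Theta t) l) t0 1 /\
    `| derive1 (fun t => normdev (Theta t) l) t0
       - 4 * rho * uD Phi f (Theta t0) * (K l)%:R *
         covK (fun k => coresq (Theta t0) l k)
              (fun k => coresq (gradF Phi f (Theta t0)) l k) |
    <= C Lhat
         (fun c : CIdx K => Num.sqrt (coresq (Theta t0) (tag c) (tagged c)))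
         (Num.sqrt (osum (fun o => pderiv f (layer_tensors Phi (Theta t0)) o ^+ 2)))
       * rho ^+ 2.
Proof.
move=> HK HPhi.
have HMl : forall l : 'I_D, exists M : R -> R, (forall r, 0 <= M r) /\
  forall (r : R) (z w : LCoord n l -> R) j, 0 <= r ->
   (forall c, `|z c| <= r) -> (forall c, `|w c| <= r) ->
   `|Phi l z j| <= M r /\
   `|Phi l z j - Phi l w j| <= M r * \sum_(c : LF n l) `|z c - w c|.
  move=> l; have [Mb [Mb0 HMb]] := Phi_bounded (HPhi l).
  have [Ml [Ml0 HMl]] := Phi_lip (HPhi l).
  exists (fun r => Mb r + Ml r); split; first by move=> r; apply: addr_ge0.
  move=> r z w j r0 zr wr; split.
    by apply: le_trans (HMb r z j r0 zr) _; rewrite lerDl.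
  apply: le_trans (HMl r z w j r0 zr wr) _; apply: ler_wpM2r.
    by apply: sumr_ge0.
  by rewrite lerDr.
case: (choice HMl) => Mf HMf.
pose Mg r := \sum_(l < D) Mf l r.
have Mg0 : forall r, 0 <= Mg r by move=> r; apply: sumr_ge0 => l _; case: (HMf l).
have Mge : forall l r, Mf l r <= Mg r.
  by move=> l r; apply: (@term_le_sum R _ (fun l => Mf l r)) => l'; case: (HMf l').
pose NOr := NO R D m.
pose NC : R := (#|CF n|)%:R.
pose NKt : R := \sum_(l < D) (K l)%:R.
exists (fun Lh s G => let S := \sum_(l < D) \sum_(k < K l) s (existT _ l k) in
   let M := Mg (S + 1) in
   4 * (NKt * S ^+ 2) * NC * (NOr * ((`|Lh| * NOr * M * M + G * M) * NC))).
move=> Lhat f Hd Hlip rho rho0 rho1 Theta t0 HTh Hne l.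
have L0 : 0 <= `|Lhat| by [].
have HL : forall (P Q : OF m -> R) o,
    `|pderiv f P o - pderiv f Q o| <= `|Lhat| * \sum_o' `|P o' - Q o'|.
  move=> P Q o.
  have H1 := @abs_le_sqrt R _ (fun o => pderiv f P o - pderiv f Q o) o.
  apply: le_trans H1 _.
  rewrite -(osumE (fun o => (pderiv f P o - pderiv f Q o) ^+ 2)).
  apply: le_trans (Hlip P Q) _.
  apply: le_trans (_ : `|Lhat| * Num.sqrt (osum (fun o => (P o - Q o) ^+ 2)) <= _).
    by apply: ler_wpM2r; [apply: sqrtr_ge0 | apply: ler_norm].
  apply: ler_wpM2l => //; rewrite (osumE (fun o => (P o - Q o) ^+ 2)).
  exact: (@sqrt_le_l1 R _ (fun o => P o - Q o)).
set th := Theta t0.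
set g := gradF Phi f th.
set u := uD Phi f th.
pose tht := fun y => th y + rho * u * g y.
pose gt := gradF Phi f tht.
have Hsk : forall k, is_derive t0 (1:R) (fun t => coresq (Theta t) l k)
    (\sum_(i < n l k) 2 * th (coord k i) * - gt (coord k i)).
  move=> k; rewrite /coresq.
  apply: (@is_derive_sumf R _ (fun i t => Theta t (coord k i) ^+ 2)) => i.
  apply: is_derive_sqf; exact: HTh.
pose s := fun k => coresq th l k.
pose ds := fun k => \sum_(i < n l k) 2 * th (coord k i) * - gt (coord k i).
have HQ : is_derive t0 (1:R) (fun t => normdev (Theta t) l)
   (\sum_(k < K l) 2 * (s k - meanK s) * (ds k - (K l)%:R^-1 * \sum_(k' < K l) ds k')).
  rewrite /normdev /meanK.
  apply: (@is_derive_sumf R _ (fun k t => (coresq (Theta t) l k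
       - (K l)%:R^-1 * \sum_(i < K l) coresq (Theta t) l i) ^+ 2)) => k.
  apply: (@is_derive_sqf R (fun t => coresq (Theta t) l k
       - (K l)%:R^-1 * \sum_(i < K l) coresq (Theta t) l i)).
  apply: (@is_derive_subf R (fun t => coresq (Theta t) l k)
     (fun t => (K l)%:R^-1 * \sum_(i < K l) coresq (Theta t) l i)).
  apply: (@is_derive_cmul R (fun t => \sum_(i < K l) coresq (Theta t) l i)).
  by apply: (@is_derive_sumf R _ (fun i t => coresq (Theta t) l i)) => i; exact: Hsk.
case: HQ => Hder Hval.
split; first exact: Hder.
rewrite derive1E Hval.
cbv zeta.
set S := \sum_(l0 < D) \sum_(k < K l0) _.
set M := Mg (S + 1).
set G := Num.sqrt _.
have S0 : 0 <= S by apply: sumr_ge0 => l0 _; apply: sumr_ge0 => k _; apply: sqrtr_ge0.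
have Kpos : 0 < (K l)%:R :> R.
  by rewrite ltr0n; apply: leq_trans (HK l).
have Kn0 : (K l)%:R != 0 :> R by rewrite gt_eqF.
have Hcs : 0 < csum (fun x => g x ^+ 2).
  case: Hne => x Hx; rewrite (csumE (fun x => g x ^+ 2)).
  apply: lt_le_trans (_ : 0 < g x ^+ 2) _.
    by rewrite lt0r sqrf_eq0 Hx sqr_ge0.
  by apply: (@term_le_sum R _ (fun x => g x ^+ 2)) => y; apply: sqr_ge0.
have u0 : 0 < u by rewrite /u /uD invr_gt0 sqrtr_gt0.
have ug : forall c, `|u * g c| <= 1.
  move=> c; rewrite normrM (gtr0_norm u0) /u /uD.
  have Hc := @abs_le_sqrt R (CF n) (fun c => g c) c.
  rewrite -(csumE (fun x => g x ^+ 2)) in Hc.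
  by rewrite mulrC ler_pdivrMr ?sqrtr_gt0 // mul1r.
have dth : forall c, `|tht c - th c| <= rho.
  move=> c; rewrite /tht addrAC subrr add0r -mulrA normrM (gtr0_norm rho0).
  by apply: ler_piMr => //; apply: ltW.
have hthS : forall c, `|th c| <= S.
  move=> [l' [k' i']].
  apply: le_trans (_ : Num.sqrt (coresq th l' k') <= _).
    exact: (@abs_le_sqrt R _ (fun i => th (coord k' i)) i').
  apply: le_trans (_ : \sum_(k < K l') Num.sqrt (coresq th l' k) <= _).
    by apply: (@term_le_sum R _ (fun k => Num.sqrt (coresq th l' k))) => k; apply: sqrtr_ge0.
  apply: (@term_le_sum R _ (fun l0 => \sum_(k < K l0) Num.sqrt (coresq th l0 k))) => l0.
  by apply: sumr_ge0 => k _; apply: sqrtr_ge0.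
have hth : forall c, `|th c| <= S + 1 by move=> c; have := hthS c; lra.
have htht : forall c, `|tht c| <= S + 1.
  move=> c; have -> : tht c = th c + (tht c - th c) by rewrite addrC subrK.
  apply: le_trans (ler_normD _ _) _; have := hthS c; have := dth c; lra.
have r1 : 1 <= S + 1 by lra.
have r0 : 0 <= S + 1 by lra.
have HM : forall l' (z w : LCoord n l' -> R) j,
  (forall c, `|z c| <= S + 1) -> (forall c, `|w c| <= S + 1) ->
  `|Phi l' z j| <= M /\ `|Phi l' z j - Phi l' w j| <= M * \sum_(c : LF n l') `|z c - w c|.
  move=> l' z w j zr wr; have [_ H] := HMf l'; have [H1 H2] := H (S + 1) z w j r0 zr wr.
  split; first exact: le_trans H1 (Mge l' _).
  apply: le_trans H2 _; apply: ler_wpM2r; first by apply: sumr_ge0.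
  exact: Mge.
have M0 : 0 <= M by apply: Mg0.
have G0 : 0 <= G by apply: sqrtr_ge0.
have hG : forall o : OF m, `|pderiv f (layer_tensors Phi th) o| <= G.
  move=> o; rewrite /G (osumE (fun o => pderiv f (layer_tensors Phi th) o ^+ 2)).
  exact: (@abs_le_sqrt R _ (fun o => pderiv f (layer_tensors Phi th) o)).
have Hg : forall l' (k : 'I_(K l')) (i : 'I_(n l' k)),
    `|gt (coord k i) - g (coord k i)|
    <= NOr * ((`|Lhat| * NOr * M * M + G * M) * \sum_(c : CF n) `|tht c - th c|).
  move=> l' k i.
  exact: (@g_lip R D K n m Phi HPhi f _ L0 Hd HL (S + 1) M r1 HM M0 G G0 th tht l' k i hth htht hG).
have N1b : \sum_(c : CF n) `|tht c - th c| <= NC * rho.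
  apply: le_trans (_ : \sum_(c : CF n) rho <= _); first by apply: ler_sum => c _.
  by rewrite sumr_const /NC mulr_natl.
have NO0 : 0 <= NOr by apply: NO_ge0.
have NC0 : 0 <= NC by apply: ler0n.
set Bg := NOr * ((`|Lhat| * NOr * M * M + G * M) * (NC * rho)).
have coef0 : 0 <= `|Lhat| * NOr * M * M + G * M.
  apply: addr_ge0; apply: mulr_ge0 => //; apply: mulr_ge0 => //.
  by apply: mulr_ge0.
have Bg0 : 0 <= Bg.
  apply: mulr_ge0 => //; apply: mulr_ge0 => //; apply: mulr_ge0 => //; exact: ltW.
have Hg' : forall l' (k : 'I_(K l')) (i : 'I_(n l' k)),
    `|gt (coord k i) - g (coord k i)| <= Bg.
  move=> l' k i; apply: le_trans (Hg l' k i) _.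
  apply: ler_wpM2l => //; apply: ler_wpM2l => //.
pose E := \sum_(j < m l) pderiv f (layer_tensors Phi tht) (existT _ l j) * Phi l (layer tht l) j.
have Eu : forall k, \sum_(i < n l k) tht (coord k i) * gt (coord k i) = E.
  by move=> k; exact: (euler HPhi L0 Hd HL tht l k).
pose B := fun k : 'I_(K l) => \sum_(i < n l k) g (coord k i) * gt (coord k i).
have Eds : forall k, ds k = -2 * (E - rho * u * B k).
  move=> k; rewrite -(Eu k) /ds /B mulr_sumr -sumrB mulr_sumr.
  by apply: eq_bigr => i _; rewrite /tht; ring.
pose w := fun k => s k - meanK s.
have sw0 : \sum_(k < K l) w k = 0.
  rewrite /w sumrB sumr_const card_ord /meanK -[X in _ - X]mulr_natl.
  by rewrite mulrA mulfV // mul1r subrr.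
have wc : forall (a : R) (b : 'I_(K l) -> R),
    \sum_(k < K l) w k * (a + b k) = \sum_(k < K l) w k * b k.
  move=> a b; under eq_bigr do rewrite mulrDr.
  by rewrite big_split /= -mulr_suml sw0 mul0r add0r.
pose q := fun k => coresq g l k.
have Ediff : \sum_(k < K l) 2 * (s k - meanK s) * (ds k - (K l)%:R^-1 * \sum_(k' < K l) ds k')
    - 4 * rho * u * (K l)%:R * covK (fun k => coresq th l k) (fun k => coresq g l k)
    = \sum_(k < K l) w k * (4 * rho * u *
          \sum_(i < n l k) g (coord k i) * (gt (coord k i) - g (coord k i))).
  set c1 := (K l)%:R^-1 * \sum_(k' < K l) ds k'.
  have Q1 : \sum_(k < K l) 2 * (s k - meanK s) * (ds k - c1)
            = \sum_(k < K l) w k * (2 * ds k).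
    rewrite -(wc (-2 * c1) (fun k => 2 * ds k)); apply: eq_bigr => k _; rewrite /w; ring.
  have T1 : 4 * rho * u * (K l)%:R * covK (fun k => coresq th l k) (fun k => coresq g l k)
            = \sum_(k < K l) w k * (4 * rho * u * q k).
    rewrite /covK mulrA mulfK //.
    rewrite mulr_sumr -(wc (- (4 * rho * u) * meanK q) (fun k => 4 * rho * u * q k)).
    by apply: eq_bigr => k _; rewrite /w /q /s; ring.
  rewrite Q1 T1 -sumrB -(wc (-4 * E)); apply: eq_bigr => k _.
  have SB : \sum_(i < n l k) g (coord k i) * (gt (coord k i) - g (coord k i))
          = B k - q k.
    rewrite /B /q /coresq -sumrB; apply: eq_bigr => i _; ring.
  rewrite SB Eds; ring.
have sqS : forall k, Num.sqrt (s k) <= S.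
  move=> k; apply: le_trans (_ : \sum_(k' < K l) Num.sqrt (coresq th l k') <= _).
    by apply: (@term_le_sum R _ (fun k => Num.sqrt (coresq th l k))) => k'; apply: sqrtr_ge0.
  apply: (@term_le_sum R _ (fun l0 => \sum_(k < K l0) Num.sqrt (coresq th l0 k))) => l0.
  by apply: sumr_ge0 => k' _; apply: sqrtr_ge0.
have s0 : forall k, 0 <= s k by move=> k; apply: sumr_ge0 => i _; apply: sqr_ge0.
have sS : forall k, s k <= S ^+ 2.
  move=> k; rewrite -(sqr_sqrtr (s0 k)) !expr2.
  by apply: ler_pM; rewrite ?sqrtr_ge0 ?sqS.
have mS0 : 0 <= meanK s.
  by apply: mulr_ge0; [rewrite invr_ge0 ler0n | apply: sumr_ge0 => k _].
have mS : meanK s <= S ^+ 2.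
  rewrite /meanK mulrC ler_pdivrMr //.
  apply: le_trans (_ : \sum_(k < K l) S ^+ 2 <= _); first by apply: ler_sum => k _.
  by rewrite sumr_const card_ord mulr_natr.
have Hw : forall k, `|w k| <= S ^+ 2.
  move=> k; rewrite /w ler_norml; have := s0 k; have := sS k; lra.
have SW : \sum_(k < K l) `|w k| <= NKt * S ^+ 2.
  apply: le_trans (_ : \sum_(k < K l) S ^+ 2 <= _); first by apply: ler_sum => k _.
  rewrite sumr_const card_ord -mulr_natl; apply: ler_wpM2r; first exact: sqr_ge0.
  by apply: (@term_le_sum R _ (fun l0 => (K l0)%:R)) => l0.
have HX : forall k, `|4 * rho * u *
          \sum_(i < n l k) g (coord k i) * (gt (coord k i) - g (coord k i))|
        <= 4 * rho * (NC * Bg).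
  move=> k.
  have -> : 4 * rho * u * \sum_(i < n l k) g (coord k i) * (gt (coord k i) - g (coord k i))
      = 4 * rho * \sum_(i < n l k) (u * g (coord k i)) * (gt (coord k i) - g (coord k i)).
    rewrite -mulrA mulr_sumr; congr (_ * _); apply: eq_bigr => i _; ring.
  rewrite normrM ger0_norm; last by apply: mulr_ge0 => //; apply: ltW.
  apply: ler_wpM2l; first by apply: mulr_ge0 => //; apply: ltW.
  apply: le_trans (ler_norm_sum _ _ _) _.
  apply: le_trans (_ : \sum_(i < n l k) `|gt (coord k i) - g (coord k i)| <= _).
    apply: ler_sum => i _; rewrite normrM; apply: ler_piMl => //; exact: ug.
  apply: le_trans (_ : \sum_(c : LF n l) `|gt (existT _ l c) - g (existT _ l c)| <= _).
    rewrite (sumLF (fun c => `|gt (existT _ l c) - g (existT _ l c)|)).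
    apply: (@term_le_sum R _ (fun k => \sum_(i < n l k)
       `|gt (existT _ l (existT _ k i)) - g (existT _ l (existT _ k i))|)) => k'.
    by apply: sumr_ge0.
  apply: le_trans (@layer_sum_le R D K n (fun c => `|gt c - g c|) l (fun c => normr_ge0 _)) _.
  apply: le_trans (_ : \sum_(c : CF n) Bg <= _).
    by apply: ler_sum => -[l' [k' i']] _; apply: Hg'.
  by rewrite sumr_const /NC mulr_natl.
rewrite Ediff.
apply: le_trans (ler_norm_sum _ _ _) _.
apply: le_trans (_ : \sum_(k < K l) `|w k| * (4 * rho * (NC * Bg)) <= _).
  by apply: ler_sum => k _; rewrite normrM; apply: ler_wpM2l => //; apply: HX.
rewrite -mulr_suml.
apply: le_trans (_ : NKt * S ^+ 2 * (4 * rho * (NC * Bg)) <= _).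
  apply: ler_wpM2r => //; apply: mulr_ge0; first by apply: mulr_ge0 => //; apply: ltW.
  by apply: mulr_ge0.
rewrite le_eqVlt; apply/orP; left; apply/eqP; rewrite /Bg; ring.
Qed.
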